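(* Let $\Theta\subseteq\mathbb{R}$ be the parameter space, let $\mathbf U$ be a random variable with values in a space $\mathbb M$ whose distribution does not depend on $\theta$, and let $S$ be a real-valued statistic generated by the data generating equation $S=G_S(\mathbf U,\theta)$, where $G_S:\mathbb M\times\Theta\to\mathbb{R}$ is deterministic. Write $F_S(s,\theta)=P_\theta(S\le s)$ for the distribution function of $S$, $Q_s(\mathbf u)=\{\theta\in\Theta: s=G_S(\mathbf u,\theta)\}$ for the inverse image, and let $\mathbf U^\star$ be an independent copy of $\mathbf U$. Assume 1) for every $\mathbf u$, the function $\theta\mapsto G_S(\mathbf u,\theta)$ is non-decreasing; and 2) for every $\mathbf u$ and every $s$, $Q_s(\mathbf u)\neq\emptyset$. Then each $Q_s(\mathbf u)$ is an interval with endpoints $Q_s^-(\mathbf u)\le Q_s^+(\mathbf u)$, and for any $s_0$ and $\theta_0$, $$P\big(Q^+_{s_0}(\mathbf U^\star)\le\theta_0\big)=1-\lim_{\epsilon\downarrow0}F_S(s_0,\theta_0+\epsilon),\qquad P\big(Q^-_{s_0}(\mathbf U^\star)\le\theta_0\big)=1-\lim_{\epsilon\downarrow0}F_S(s_0-\epsilon,\theta_0).$$ If additionally 3) for all $\theta_0$ and $s_0$, $P_{\theta_0}(S=s_0)=F_S(s_0,\theta_0)-\lim_{\epsilon\downarrow0}F_S(s_0-\epsilon,\theta_0)=0$, then $F_S(s,\theta)$ is continuous as a function of $\theta$, $Q^+_{s_0}(\mathbf U^\star)=Q^-_{s_0}(\mathbf U^\star)$ with probability $1$, and $$P\big(Q_{s_0}(\mathbf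 U^\star)\le\theta_0\big)=1-F_S(s_0,\theta_0).$$
   Context: In the generalized fiducial framework, the generalized fiducial distribution (GFD) of $\theta$ given an observed value $s$ is the conditional distribution of $Q_s(\mathbf U^\star)$ given $Q_s(\mathbf U^\star)\neq\emptyset$; under assumption 2) this is simply the distribution of $Q_s(\mathbf U^\star)$. Under assumption 3), $Q_{s_0}(\mathbf U^\star)$ denotes the common value $Q^+_{s_0}(\mathbf U^\star)=Q^-_{s_0}(\mathbf U^\star)$. *)

(* Defs.v *)
From mathcomp Require Import all_boot all_order all_algebra.
From mathcomp Require Import all_classical all_reals all_analysis.
Set Implicit Arguments. Unset Strict Implicit. Unset Printing Implicit Defensive.
Import Order.TTheory GRing.Theory Num.Theory numFieldNormedType.Exports.
Local Open Scope classical_set_scope.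
Local Open Scope ring_scope.

(* Distribution function F_S(s,theta) = P_theta(S <= s), with S = G_S(U,theta)
   and U the identity on the probability space (M, P). *)
Definition distF {d} {M : measurableType d} {R : realType}
  (P : probability M R) (G : M -> R -> R) (s theta : R) : \bar R :=
  P [set u | G u theta <= s].

Definition Qset {M : Type} {R : realType} (Theta : set R) (G : M -> R -> R)
  (s : R) (u : M) : set R := [set theta | Theta theta /\ s = G u theta].

Definition Qplus {M : Type} {R : realType} (Theta : set R) (G : M -> R -> R)
  (s : R) (u : M) : \bar R := ereal_sup (EFin @` Qset Theta G s u).
Definition Qminus {M : Type} {R : realType} (Theta : set R) (G : M -> R -> R)
  (s : R) (u : M) : \bar R := ereal_inf (EFin @` Qset Theta G s u).

(* Main.v *)
Require Import Defs.
From mathcomp Require Import all_boot all_order all_algebra.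
From mathcomp Require Import all_classical all_reals all_analysis.
From mathcomp Require Import lra.
Import Order.TTheory GRing.Theory Num.Theory numFieldNormedType.Exports.
Local Open Scope classical_set_scope.
Local Open Scope ring_scope.


Lemma mono_lt (R : realType) (Theta : set R) (g : R -> R)
  (H1 : {in Theta &, {homo g : x y / x <= y}}) x y :
  Theta x -> Theta y -> g x < g y -> x < y.
Proof.
move=> Tx Ty gxy; rewrite ltNge; apply/negP => yx.
have := H1 y x; rewrite !inE => /(_ Ty Tx yx) => h.
by move: gxy; rewrite ltNge h.
Qed.

Lemma part1 (M : Type) (R : realType) (Theta : set R) (G : M -> R -> R)
  (Theta_itv : is_interval Theta)
  (H1 : forall u, {in Theta &, {homo G u : x y / x <= y}})
  (H2 : forall u s, Qset Theta G s u !=set0) s u :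
  is_interval (Qset Theta G s u) /\
               (Qminus Theta G s u <= Qplus Theta G s u)%E.
Proof.
split.
  move=> x y [Tx sx] [Ty sy] z /andP[xz zy]; have Tz : Theta z.
    by apply: (Theta_itv x y) => //; rewrite xz zy.
  split => //; apply/eqP; rewrite eq_le; apply/andP; split.
    by rewrite sx; apply: (H1 u); rewrite ?inE.
  by rewrite sy; apply: (H1 u); rewrite ?inE.
have [x Qx] := H2 u s.
apply: (@le_trans _ _ x%:E).
  by apply: ereal_inf_lbound; exists x.
by apply: ereal_sup_ubound; exists x.
Qed.

Lemma QplusP (M : Type) (R : realType) (Theta : set R) (G : M -> R -> R)
  (H1 : forall u, {in Theta &, {homo G u : x y / x <= y}})
  (H2 : forall u s, Qset Theta G s u !=set0) s u t0 :
  (t0%:E < Qplus Theta G s u)%E <-> exists t, [/\ Theta t, t0 < t & G u t <= s].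
Proof.
split.
  move=> /ereal_sup_gt [y [x [Tx sx] <-]]; rewrite lte_fin => t0x.
  by exists x; split => //; rewrite sx.
move=> [t [Tt t0t Gts]].
have [t' [Tt' st']] := H2 u s.
have [t't|tt'] := leP t' t.
  have : G u t <= G u t' by rewrite st' in Gts.
  move=> Gtt'; have Gt : s = G u t.
    apply/eqP; rewrite eq_le Gts andbT st'; apply: (H1 u); rewrite ?inE //.
  apply: (@lt_le_trans _ _ t%:E); first by rewrite lte_fin.
  by apply: ereal_sup_ubound; exists t.
apply: (@lt_le_trans _ _ t'%:E); first by rewrite lte_fin (lt_trans t0t).
by apply: ereal_sup_ubound; exists t'.
Qed.

Lemma QminusP (M : Type) (R : realType) (Theta : set R) (G : M -> R -> R)
  (H1 : forall u, {in Theta &, {homo G u : x y / x <= y}})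
  (H2 : forall u s, Qset Theta G s u !=set0) s u t0 : Theta t0 ->
  (Qminus Theta G s u <= t0%:E)%E <-> s <= G u t0.
Proof.
move=> Tt0; split.
  apply: contraPP => /negP; rewrite -ltNge => Gs.
  have [t' [Tt' st']] := H2 u ((G u t0 + s) / 2).
  have t0t' : t0 < t'.
    apply: (@mono_lt _ _ _ (H1 u)) => //; rewrite -st'.
    by rewrite ltr_pdivlMr // mulr2n mulrDr mulr1 ltrD2l.
  apply/negP; rewrite -ltNge; apply: (@lt_le_trans _ _ t'%:E); first by rewrite lte_fin.
  apply: le_ereal_inf_tmp => _ [x [Tx sx] <-]; rewrite lee_fin ltW //.
  apply: (@mono_lt _ _ _ (H1 u)) => //; rewrite -st' -sx.
  by rewrite ltr_pdivrMr // mulr2n mulrDr mulr1 ltrD2r.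
move=> sG.
have [t' [Tt' st']] := H2 u s.
have [t't0|t0t'] := leP t' t0.
  apply: (@le_trans _ _ t'%:E); last by rewrite lee_fin.
  by apply: ereal_inf_lbound; exists t'.
have Gt : s = G u t0.
  apply/eqP; rewrite eq_le sG /= st'; apply: (H1 u); rewrite ?inE //; exact: ltW.
by rewrite /Qminus; apply: ereal_inf_lbound; exists t0.
Qed.


Definition vs (R : realType) (a δ : R) (n : nat) : R := a + δ / 2 * n.+1%:R^-1.

Lemma vseq (R : realType) (a δ : R) : 0 < δ ->
  let v := @vs R a δ in
  [/\ (forall n, a < v n), (forall n, v n < a + δ),
      (forall n m, (n <= m)%N -> v m <= v n) &
      (forall x, a < x -> exists n, v n < x)].
Proof.
move=> d0 v; rewrite /v /vs; split.
- by move=> n; rewrite /v ltrDl mulr_gt0 // ?invr_gt0 // divr_gt0.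
- move=> n; rewrite /v ltrD2l; apply: (@le_lt_trans _ _ (δ / 2)).
    apply: ler_piMr; first exact/ltW/divr_gt0. by rewrite invf_le1 ?ltr0Sn // ler1n.
  by rewrite ltr_pdivrMr // ltr_pMr // ltr1n.
- move=> n m nm; rewrite /v lerD2l ler_pM2l ?divr_gt0 //.
  by rewrite lef_pV2 ?posrE // ler_nat.
move=> x ax.
have vc : v n @[n --> \oo] --> a.
  rewrite -[X in _ --> X]addr0; apply: (@cvgD _ R^o); first exact: cvg_cst.
  rewrite -[X in _ --> X](mulr0 (δ / 2)); apply: (@cvgMl_tmp _ _ _ _ (fun n : nat => n.+1%:R^-1 : R)).
  by rewrite gtr0_cvgV0 ?cvg_shiftS; [exact: cvgr_idn | near=> n].
have [N _ HN] := cvgr_lt _ vc _ ax.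
by exists N; apply: HN => /=.
Unshelve. all: by end_near.
Qed.

Lemma L_incr (d : measure_display) (M : measurableType d) (R : realType)
  (P : probability M R) (a δ : R) (A : R -> set M) (E : set M) :
  0 < δ ->
  (forall x, a < x -> x < a + δ -> measurable (A x)) ->
  (forall x y, a < x -> x <= y -> y < a + δ -> A y `<=` A x) ->
  (forall x, a < x -> x < a + δ -> A x `<=` E) ->
  (forall w, E w -> exists x, [/\ a < x, x < a + δ & A x w]) ->
  measurable E /\ P (A x) @[x --> a^'+] --> P E.
Proof.
move=> d0 mA Amono AE EA.
have [va vd vmono vsmall] := @vseq R a δ d0.
set v := @vs R a δ in va vd vmono vsmall.
pose F n := A (v n).
have EF : E = \bigcup_n F n.
  apply/seteqP; split => [w Ew|w [n _ Fw]]; last exact: (AE (v n)).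
  have [x [ax xd Axw]] := EA w Ew.
  have [N vN] := vsmall x ax.
  exists N => //; rewrite /F; apply: (Amono (v N) x) => //; exact: ltW.
have mF n : measurable (F n) by apply: mA.
have mE : measurable E by rewrite EF; exact: bigcupT_measurable.
split => //.
have ab : (BRight a < BLeft (a + δ))%O by rewrite ltBSide /= ltrDl.
have homo : {in Interval (BRight a) (BLeft (a + δ)) &,
    {homo (fun x => P (A x)) : n m / (n <= m)%R >-> (m <= n)%E}}.
  move=> x y; rewrite !in_itv /= => /andP[ax xd] /andP[ay yd] xy.
  by apply: le_measure; rewrite ?inE; [apply: mA|apply: mA|apply: Amono].
have := @nonincreasing_at_right_cvge R (fun x => P (A x)) a _ ab homo.
suff -> : P E = ereal_sup [set P (A x) | x in [set` Interval (BRight a) (BLeft (a + δ))]] by [].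
apply/eqP; rewrite eq_le; apply/andP; split; last first.
  apply: ge_ereal_sup => y [x]; rewrite /= in_itv /= => /andP[ax xd] <-.
  by apply: le_measure; rewrite ?inE //; [apply: mA|apply: AE].
have Fmono : {homo F : n m / (n <= m)%N >-> (n <= m)%O}.
  move=> n m nm; apply/subsetPset; apply: Amono => //; exact: vmono.
have hF := @nondecreasing_cvg_mu _ _ _ P F mF (bigcupT_measurable _ mF) Fmono.
have PFmono : {homo (P \o F) : n m / (n <= m)%N >-> (n <= m)%E}.
  by move=> n m nm; apply: le_measure; rewrite ?inE //; exact/subsetPset/Fmono.
have hF' := ereal_nondecreasing_cvgn PFmono.
rewrite EF (cvg_unique _ hF hF'); last exact: ereal_hausdorff. apply: (@le_ereal_sup R) => _ [n _ <-].
by exists (v n) => //=; rewrite in_itv /= va vd.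
Qed.

Lemma L_decr (d : measure_display) (M : measurableType d) (R : realType)
  (P : probability M R) (a δ : R) (A : R -> set M) (E : set M) :
  0 < δ ->
  (forall x, a < x -> x < a + δ -> measurable (A x)) ->
  (forall x y, a < x -> x <= y -> y < a + δ -> A x `<=` A y) ->
  (forall x, a < x -> x < a + δ -> E `<=` A x) ->
  (forall w, (forall x, a < x -> x < a + δ -> A x w) -> E w) ->
  P (A x) @[x --> a^'+] --> P E.
Proof.
move=> d0 mA Amono EA AE.
have [va vd vmono vsmall] := @vseq R a δ d0.
set v := @vs R a δ in va vd vmono vsmall.
pose F n := A (v n).
have EF : E = \bigcap_n F n.
  apply/seteqP; split => [w Ew n _|w Fw]; first exact: (EA (v n)).
  apply: AE => x ax xd.
  have [N vN] := vsmall x ax.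
  apply: (Amono (v N) x) => //; [exact: ltW|exact: Fw].
have mF n : measurable (F n) by apply: mA.
have ab : (BRight a < BLeft (a + δ))%O by rewrite ltBSide /= ltrDl.
have homo : {in Interval (BRight a) (BLeft (a + δ)) &,
    {homo (fun x => P (A x)) : n m / (n <= m)%R >-> (n <= m)%E}}.
  move=> x y; rewrite !in_itv /= => /andP[ax xd] /andP[ay yd] xy.
  by apply: le_measure; rewrite ?inE; [apply: mA|apply: mA|apply: Amono].
have := @nondecreasing_at_right_cvge R (fun x => P (A x)) a _ ab homo.
suff -> : P E = ereal_inf [set P (A x) | x in [set` Interval (BRight a) (BLeft (a + δ))]] by [].
have mE : measurable E by rewrite EF; exact: bigcapT_measurable.
apply/eqP; rewrite eq_le; apply/andP; split.
  apply: le_ereal_inf_tmp => y [x]; rewrite /= in_itv /= => /andP[ax xd] <-.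
  by apply: le_measure; rewrite ?inE //; [apply: mA|apply: EA].
have Fmono : {homo F : n m / (n <= m)%N >-> (m <= n)%O}.
  move=> n m nm; apply/subsetPset; apply: Amono => //; exact: vmono.
have PF0 : (P (F 0%N) < +oo)%E.
  by rewrite (le_lt_trans (probability_le1 _ _)) ?ltry.
have hF := @nonincreasing_cvg_mu _ _ _ P F PF0 mF (bigcapT_measurable mF) Fmono.
have PFmono : {homo (P \o F) : n m / (n <= m)%N >-> (m <= n)%E}.
  by move=> n m nm; apply: le_measure; rewrite ?inE //; exact/subsetPset/Fmono.
have hF' := ereal_nonincreasing_cvgn PFmono.
rewrite EF (cvg_unique _ hF hF'); last exact: ereal_hausdorff.
apply: (@le_ereal_inf R) => _ [n _ <-].
by exists (v n) => //=; rewrite in_itv /= va vd.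
Qed.

Lemma lr_dnbhs (R : realType) (T : topologicalType) (f : R -> T) (p : R) (l : T) :
  f x @[x --> p^'+] --> l -> f x @[x --> p^'-] --> l -> f x @[x --> p^'] --> l.
Proof.
move=> hr hl U Ul.
have [a /= a0 Ha] := hr U Ul.
have [b /= b0 Hb] := hl U Ul.
exists (Num.min a b) => /=; first by rewrite lt_min a0 b0.
move=> y /= hy; rewrite neq_lt => /orP[yp|py].
  by apply: Hb => //=; apply: (lt_le_trans hy); rewrite ge_min lexx orbT.
by apply: Ha => //=; apply: (lt_le_trans hy); rewrite ge_min lexx.
Qed.

Lemma shift_right (R : realType) (a : R) : (a + e) @[e --> 0^'+] --> a^'+.
Proof.
move=> S [r /= r0 hr]; exists r => // e /= he e0; apply: hr => /=.
  by rewrite opprD addrA subrr sub0r normrN; rewrite sub0r normrN in he.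
by rewrite ltrDl.
Qed.

Lemma open_delta (R : realType) (Theta : set R) t : open Theta -> Theta t ->
  exists2 δ, 0 < δ & forall x, t - δ < x -> x < t + δ -> Theta x.
Proof.
move=> oT Tt; have := oT t Tt; move=> [δ /= δ0 hδ]; exists δ => // x h1 h2.
apply: hδ => /=; rewrite ltr_norml; apply/andP; split.
  lra.
lra.
Qed.

Lemma mle (d : measure_display) (M : measurableType d) (R : realType)
  (f : M -> R) (s : R) : measurable_fun setT f -> measurable [set u | f u <= s].
Proof.
move=> mf; have := mf measurableT _ (measurable_itv `]-oo, s]); rewrite setTI.
by congr measurable; apply/seteqP; split => u /=; rewrite in_itv.
Qed.

Lemma mlt (d : measure_display) (M : measurableType d) (R : realType)
  (f : M -> R) (s : R) : measurable_fun setT f -> measurable [set u | f u < s].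
Proof.
move=> mf; have := mf measurableT _ (measurable_itv `]-oo, s[); rewrite setTI.
by congr measurable; apply/seteqP; split => u /=; rewrite in_itv.
Qed.

Lemma meq (d : measure_display) (M : measurableType d) (R : realType)
  (f : M -> R) (s : R) : measurable_fun setT f -> measurable [set u | f u = s].
Proof.
move=> mf; have := mf measurableT _ (measurable_set1 s); rewrite setTI.
by congr measurable.
Qed.

Theorem theorem1 (d : measure_display) (M : measurableType d) (R : realType)
  (P : probability M R) (Theta : set R) (G : M -> R -> R)
  (Theta_open : open Theta) (Theta_itv : is_interval Theta)
  (G_meas : forall theta, Theta theta -> measurable_fun setT (fun u => G u theta))
  (H1 : forall u, {in Theta &, {homo G u : x y / x <= y}})
  (H2 : forall u s, Qset Theta G s u !=set0) :
  (forall s u, is_interval (Qset Theta G s u) /\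
               (Qminus Theta G s u <= Qplus Theta G s u)%E) /\
  (forall s0 theta0, Theta theta0 ->
     distF P G s0 (theta0 + e) @[e --> 0^'+] -->
       (1 - P [set u | (Qplus Theta G s0 u <= theta0%:E)%E])%E /\
     distF P G (s0 - e) theta0 @[e --> 0^'+] -->
       (1 - P [set u | (Qminus Theta G s0 u <= theta0%:E)%E])%E) /\
  ((forall theta0 s0, Theta theta0 -> P [set u | G u theta0 = s0] = 0%E) ->
     (forall s theta, Theta theta ->
        distF P G s x @[x --> theta] --> distF P G s theta) /\
     (forall s0, P [set u | Qplus Theta G s0 u <> Qminus Theta G s0 u] = 0%E) /\
     (forall s0 theta0, Theta theta0 ->
        P [set u | (Qplus Theta G s0 u <= theta0%:E)%E] = (1 - distF P G s0 theta0)%E /\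
        P [set u | (Qminus Theta G s0 u <= theta0%:E)%E] = (1 - distF P G s0 theta0)%E)).
Proof.
have Mle t s : Theta t -> measurable [set u | G u t <= s].
  by move=> Tt; exact: (@mle _ _ _ (fun u => G u t) s (G_meas t Tt)).
have Mlt t s : Theta t -> measurable [set u | G u t < s].
  by move=> Tt; exact: (@mlt _ _ _ (fun u => G u t) s (G_meas t Tt)).
have Meq t s : Theta t -> measurable [set u | G u t = s].
  by move=> Tt; exact: (@meq _ _ _ (fun u => G u t) s (G_meas t Tt)).
have QP s u t := @QplusP M R Theta G H1 H2 s u t.
have QM s u t := @QminusP M R Theta G H1 H2 s u t.
have Hplus s0 t0 : Theta t0 ->
    measurable [set u | (t0%:E < Qplus Theta G s0 u)%E] /\
    P [set u | G u x <= s0] @[x --> t0^'+] -->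
      P [set u | (t0%:E < Qplus Theta G s0 u)%E].
  move=> Tt0; have [δ δ0 hδ] := @open_delta R Theta t0 Theta_open Tt0.
  apply: (@L_incr d M R P t0 δ (fun x => [set u | G u x <= s0])) => //.
  - move=> x tx xd; apply: Mle; apply: hδ; lra.
  - move=> x y tx xy yd u /= Gy; apply: le_trans Gy; apply: (H1 u) => //;
      rewrite inE; apply: hδ; lra.
  - move=> x tx xd u /= Gx; apply/QP; exists x; split => //; apply: hδ; lra.
  - move=> u /QP [t [Tt t0t Gt]].
    pose m := Num.min t (t0 + δ / 2).
    have hm1 : m <= t by rewrite /m ge_min lexx.
    have hm2 : m <= t0 + δ / 2 by rewrite /m ge_min lexx orbT.
    have hm3 : t0 < m by rewrite /m lt_min t0t /=; lra.
    exists m; split => //; first lra.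
    apply: le_trans Gt; apply: (H1 u); rewrite ?inE //; apply: hδ; lra.
have Hminus s0 t0 : Theta t0 ->
    P [set u | G u t0 <= s0 - e] @[e --> 0^'+] --> P [set u | G u t0 < s0].
  move=> Tt0.
  apply: (proj2 (@L_incr d M R P 0 1 (fun e => [set u | G u t0 <= s0 - e])
     [set u | G u t0 < s0] ltr01 _ _ _ _)).
  - by move=> x _ _; apply: Mle.
  - move=> x y tx xy yd u /= Gy; lra.
  - move=> x tx xd u /= Gx; lra.
  - move=> u /= Gu.
    pose m := Num.min (s0 - G u t0) (1 / 2).
    have hm1 : m <= s0 - G u t0 by rewrite /m ge_min lexx.
    have hm2 : m <= 1 / 2 by rewrite /m ge_min lexx orbT.
    have hm3 : 0 < m by rewrite /m lt_min; apply/andP; split; lra.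
    exists m; split => //=; lra.
have QplusSet s0 t0 : [set u | (Qplus Theta G s0 u <= t0%:E)%E] =
    ~` [set u | (t0%:E < Qplus Theta G s0 u)%E].
  apply/seteqP; split => u /=; first by rewrite leNgt => /negP.
  by move/negP; rewrite -leNgt.
have QminusSet s0 t0 : Theta t0 -> [set u | (Qminus Theta G s0 u <= t0%:E)%E] =
    ~` [set u | G u t0 < s0].
  move=> Tt0; apply/seteqP; split => u /=.
    by move/(QM _ _ _ Tt0); rewrite leNgt => /negP.
  by move/negP; rewrite -leNgt => /(QM _ _ _ Tt0).
split; first by move=> s u; exact: (@part1 M R Theta G Theta_itv H1 H2).
split.
  move=> s0 t0 Tt0; split.
    have [mE hE] := Hplus s0 t0 Tt0.
    rewrite QplusSet -(probability_setC P (measurableC mE)) setCK.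
    rewrite /distF; exact: (cvg_comp _ _ (@shift_right R t0) hE).
  rewrite (QminusSet _ _ Tt0) -(probability_setC P (measurableC (Mlt _ _ Tt0))) setCK.
  exact: Hminus.
move=> N.
have Plt s t : Theta t -> P [set u | G u t < s] = distF P G s t.
  move=> Tt; rewrite /distF.
  have -> : [set u | G u t <= s] = [set u | G u t < s] `|` [set u | G u t = s].
    apply/seteqP; split => u /=; first by rewrite le_eqVlt => /orP[/eqP->|->]; [right|left].
    by case=> [/ltW|->].
  rewrite (measureU P (Mlt t s Tt) (Meq t s Tt)); last first.
    by apply/seteqP; split => u //= [/lt_eqF /eqP].
  rewrite -[LHS]adde0; congr (_ + _)%E; symmetry; exact: N.
have PE s t : Theta t -> P [set u | (t%:E < Qplus Theta G s u)%E] = distF P G s t.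
  move=> Tt; have [mE _] := Hplus s t Tt.
  apply/eqP; rewrite eq_le; apply/andP; split.
    apply: le_measure; rewrite ?inE //; first exact: Mle.
    move=> u /QP [t' [Tt' tt' Gt']] /=; apply: le_trans Gt'.
    by apply: (H1 u); rewrite ?inE // ltW.
  rewrite -Plt //; apply: le_measure; rewrite ?inE //; first exact: Mlt.
  move=> u /= Glt; apply/QP.
  have [t' [Tt' st']] := H2 u s; exists t'; split => //; last by rewrite -st'.
  by apply: (@mono_lt _ _ _ (H1 u)) => //; rewrite -st'.
split.
  move=> s t Tt; apply/continuous_withinNx; apply: lr_dnbhs.
    by have [_ h] := Hplus s t Tt; rewrite -PE.
  have [δ δ0 hδ] := @open_delta R Theta t Theta_open Tt.
  rewrite /distF; apply/cvg_at_leftNP; rewrite /comp /=.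
  apply: (@L_decr d M R P (- t) δ (fun y => [set u | G u (- y) <= s])
    [set u | G u t <= s] δ0).
  - by move=> x tx xd; apply: Mle; apply: hδ; lra.
  - move=> x y tx xy yd u /= Gx; apply: le_trans Gx; apply: (H1 u);
      rewrite ?inE; [apply: hδ; lra | apply: hδ; lra | lra].
  - move=> x tx xd u /= Gt; apply: le_trans Gt; apply: (H1 u);
      rewrite ?inE //; [apply: hδ; lra | lra].
  - move=> w hall /=; rewrite leNgt; apply/negP => Gts.
    have [t' [Tt' st']] := H2 w ((s + G w t) / 2).
    have t't : t' < t by apply: (@mono_lt _ _ _ (H1 w)) => //; rewrite -st'; lra.
    pose z := Num.max t' (t - δ / 2).
    have hz1 : t' <= z by rewrite /z le_max lexx.
    have hz2 : t - δ / 2 <= z by rewrite /z le_max lexx orbT.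
    have hz3 : z < t by rewrite /z gt_max t't /=; lra.
    have Tz : Theta z by apply: hδ; lra.
    have h : - t < - z by lra.
    have h' : - z < - t + δ by lra.
    have := hall (- z) h h'; rewrite /= opprK => hzs.
    have : G w t' <= G w z by apply: (H1 w); rewrite ?inE.
    lra.
split.
  move=> s0.
  pose B (qr : rat * rat) := [set u | [/\ Theta (ratr qr.1 : R),
    Theta (ratr qr.2 : R), (ratr qr.1 : R) < ratr qr.2,
    G u (ratr qr.1) = s0 & G u (ratr qr.2) = s0]].
  pose F (n : nat) := if unpickle n is Some qr then B qr else set0.
  have mB qr : measurable (B qr).
    case: (pselect (Theta (ratr qr.1 : R) /\ Theta (ratr qr.2 : R) /\
        (ratr qr.1 : R) < ratr qr.2)) => [[T1 [T2 lt12]]|nh].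
      have -> : B qr = [set u | G u (ratr qr.1) = s0] `&` [set u | G u (ratr qr.2) = s0].
        by apply/seteqP; split => u /=; [case| case=> ? ?; split].
      exact: measurableI (Meq _ _ T1) (Meq _ _ T2).
    have -> : B qr = set0.
      by apply/seteqP; split => u //= [T1 T2 lt12 _ _]; apply: nh.
    exact: measurable0.
  have PB qr : P (B qr) = 0%E.
    apply/eqP; rewrite eq_le measure_ge0 andbT.
    case: (pselect (Theta (ratr qr.1 : R))) => [T1|nT1].
      apply: (@le_trans _ _ (P [set u | G u (ratr qr.1) = s0])).
        by apply: le_measure; rewrite ?inE //; [exact: Meq| move=> u []].
      by rewrite le_eqVlt; apply/orP; left; apply/eqP; exact: N.
    have -> : B qr = set0 by apply/seteqP; split => u //= [].
    by rewrite measure0.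
  have mF n : measurable (F n) by rewrite /F; case: unpickle.
  have PF n : P (F n) = 0%E.
    by rewrite /F; case: unpickle => [qr|]; [exact: PB|exact: measure0].
  have DF : [set u | Qplus Theta G s0 u <> Qminus Theta G s0 u] = \bigcup_n F n.
    apply/seteqP; split => u /=.
      move=> neq.
      have [itvu le] := @part1 M R Theta G Theta_itv H1 H2 s0 u.
      have lt : (Qminus Theta G s0 u < Qplus Theta G s0 u)%E.
        by rewrite lt_neqAle le andbT; apply/eqP => h; apply: neq; rewrite h.
      have [_ [y Qy <-] my] := ereal_sup_gt lt.
      have [_ [x Qx <-] xy] := ereal_inf_lt my.
      rewrite lte_fin in xy.
      have [q] := rat_in_itvoo xy; rewrite in_itv /= => /andP[xq qy].
      have [r] := rat_in_itvoo qy; rewrite in_itv /= => /andP[qr ry].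
      have Qq : Qset Theta G s0 u (ratr q).
        by apply: (itvu x y) => //; rewrite !ltW.
      have Qr : Qset Theta G s0 u (ratr r).
        by apply: (itvu x y) => //; rewrite (ltW (lt_trans xq qr)) /= ltW.
      exists (pickle (q, r)); first by [].
      rewrite /F pickleK.
      by case: Qq => T1 E1; case: Qr => T2 E2; split.
    move=> [n _]; rewrite /F; case: unpickle => [[q r]|] //= [T1 T2 lt12 G1 G2] heq.
    have h1 : (Qminus Theta G s0 u <= (ratr q)%:E)%E.
      by rewrite /Qminus; apply: ereal_inf_lbound; exists (ratr q).
    have h2 : ((ratr r)%:E <= Qplus Theta G s0 u)%E.
      by rewrite /Qplus; apply: ereal_sup_ubound; exists (ratr r).
    rewrite heq in h2; have := le_trans h2 h1; rewrite lee_fin leNgt lt12 //.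
  rewrite DF; apply/eqP; rewrite eq_le measure_ge0 andbT.
  have hs := @measure_sigma_subadditive _ _ _ P (\bigcup_n F n) F mF
    (bigcupT_measurable _ mF) (@subset_refl _ _).
  apply: le_trans hs _.
  by rewrite eseries0 // => n _ _; exact: PF.
move=> s0 t0 Tt0; split.
  have [mE _] := Hplus s0 t0 Tt0.
  by rewrite QplusSet probability_setC // PE.
by rewrite (QminusSet _ _ Tt0) probability_setC ?Plt //; exact: Mlt.
Qed.
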